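(* Let $n>1$ and $m$ be integers with $0<m<n$. Then the following maps are well defined, order-preserving and bijective: $$\mathcal{F}^{\leq\frac12}(n,m)\to\mathcal{F}^m_{n-m},\ \tfrac hk\mapsto\tfrac{h}{k-h};\qquad \mathcal{F}^m_{n-m}\to\mathcal{F}^{\leq\frac12}(n,m),\ \tfrac hk\mapsto\tfrac{h}{k+h};$$ $$\mathcal{F}^{\geq\frac12}(n,m)\to\mathcal{G}_m^{2m-n},\ \tfrac hk\mapsto\tfrac{2h-k}{h};\qquad \mathcal{G}_m^{2m-n}\to\mathcal{F}^{\geq\frac12}(n,m),\ \tfrac hk\mapsto\tfrac{k}{2k-h}.$$ Moreover, the following maps are well defined, order-reversing and bijective: $$\mathcal{F}^{\leq\frac12}(n,m)\to\mathcal{G}^{n-2m}_{n-m},\ \tfrac hk\mapsto\tfrac{k-2h}{k-h};\qquad \mathcal{G}^{n-2m}_{n-m}\to\mathcal{F}^{\leq\frac12}(n,m),\ \tfrac hk\mapsto\tfrac{k-h}{2k-h};$$ $$\mathcal{F}^{\geq\frac12}(n,m)\to\mathcal{F}^{n-m}_m,\ \tfrac hk\mapsto\tfrac{k-h}{h};\qquad \mathcal{F}^{n-m}_m\to\mathcal{F}^{\geq\frac12}(n,m),\ \tfrac hk\mapsto\tfrac{k}{k+h}.$$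
   Context: For an integer $N\geq 1$, the Farey sequence $\mathcal{F}_N$ is the ascending sequence of irreducible fractions $\tfrac hk$ (with $h\ge0$, $k\ge1$, $\gcd(h,k)=1$) such that $\tfrac01\leq\tfrac hk\leq\tfrac11$ and $1\leq k\leq N$. For integers $N\ge1$ and $M$, let $\mathcal{F}_N^M:=\left(\tfrac hk\in\mathcal{F}_N:\ h\leq M\right)$ and $\mathcal{G}_N^M:=\left(\tfrac hk\in\mathcal{F}_N:\ k-h\leq N-M\right)$. For $0<m<n$, let $\mathcal{F}(n,m):=\left(\tfrac hk\in\mathcal{F}_n:\ h\leq m,\ k-h\leq n-m\right)$ (this is the sequence of reduced fractions $\rho(b\wedge a)/\rho(b)$, over nonzero elements $b$ of the Boolean lattice of rank $n$, for a fixed element $a$ of rank $m$, where $\rho$ is rank). Its left halfsequence is $\mathcal{F}^{\leq\frac12}(n,m):=\left(\tfrac hk\in\mathcal{F}(n,m):\ \tfrac hk\leq\tfrac12\right)$ and its right halfsequence is $\mathcal{F}^{\geq\frac12}(n,m):=\left(\tfrac hk\in\mathcal{F}(n,m):\ \tfrac hk\geq\tfrac12\right)$. All sequences are ordered as rational numbers and fractions are written in lowest terms. *)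

(* Defs.v *)
(* Farey fractions are represented as rationals (type rat),
   which are always in lowest terms: h = numq q, k = denq q. *)
From mathcomp Require Import all_boot all_order all_algebra.
Set Implicit Arguments. Unset Strict Implicit. Unset Printing Implicit Defensive.
Import Order.TTheory GRing.Theory Num.Theory.
Local Open Scope ring_scope.

Definition qfrac (h k : int) : rat := h%:~R / k%:~R.

Definition farey (N : nat) : pred rat :=
  fun q => (0 <= q <= 1) && (denq q <= N%:Z).

Definition fareyF (N : nat) (M : int) : pred rat :=
  fun q => farey N q && (numq q <= M).

Definition fareyG (N : nat) (M : int) : pred rat :=
  fun q => farey N q && (denq q - numq q <= N%:Z - M).

Definition fareyB (n m : nat) : pred rat :=
  fun q => [&& farey n q, numq q <= m%:Z & denq q - numq q <= n%:Z - m%:Z].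

Definition fareyB_left (n m : nat) : pred rat :=
  fun q => fareyB n m q && (q <= 1 / 2).
Definition fareyB_right (n m : nat) : pred rat :=
  fun q => fareyB n m q && (1 / 2 <= q).

Definition order_preserving_bij (A B : pred rat) (f : rat -> rat) : Prop :=
  [/\ {in A, forall x, B (f x)},
      {in A &, forall x y, x <= y -> f x <= f y},
      {in A &, injective f}
    & {in B, forall y, exists2 x, A x & f x = y}].

Definition order_reversing_bij (A B : pred rat) (f : rat -> rat) : Prop :=
  [/\ {in A, forall x, B (f x)},
      {in A &, forall x y, x <= y -> f y <= f x},
      {in A &, injective f}
    & {in B, forall y, exists2 x, A x & f x = y}].

(* Main.v *)
Require Import Defs.
From mathcomp Require Import all_boot all_order all_algebra.
From mathcomp Require Import zify ring lra.
Import Order.TTheory GRing.Theory Num.Theory.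
Local Open Scope ring_scope.

Lemma qfrac_nd (a b : int) : 0 < b -> coprimez a b ->
  numq (qfrac a b) = a /\ denq (qfrac a b) = b.
Proof.
move=> b0 cab; rewrite /qfrac.
have cab' : coprime `|a| `|b| by exact: cab.
rewrite coprimeq_num // coprimeq_den // gtr0_sg // mul1r.
rewrite (negbTE (lt0r_neq0 b0)) gtr0_norm //.
Qed.

Lemma coprime_lin (h k h' k' A B C D : int) : coprimez h k ->
  h = A * h' + B * k' -> k = C * h' + D * k' -> coprimez h' k'.
Proof.
move=> /coprimezP [[u v] /= e] eh ek; apply/coprimezP.
exists (u * A + v * C, u * B + v * D) => /=.
by rewrite -e eh ek; ring.
Qed.

Lemma nd_coprime (q : rat) : coprimez (numq q) (denq q).
Proof. exact: coprime_num_den. Qed.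

Lemma qE (q : rat) : q = qfrac (numq q) (denq q).
Proof. by rewrite /qfrac divq_num_den. Qed.

Lemma qfrac_le (a b c d : int) : 0 < b -> 0 < d ->
  (qfrac a b <= qfrac c d) = (a * d <= c * b).
Proof.
move=> b0 d0; rewrite /qfrac ler_pdivrMr ?ltr0z // mulrAC ler_pdivlMr ?ltr0z //.
by rewrite -!intrM ler_int.
Qed.

Lemma q_le (x y : rat) : (x <= y) = (numq x * denq y <= numq y * denq x).
Proof. by rewrite {1}(qE x) {1}(qE y) qfrac_le ?denq_gt0. Qed.

Lemma farey_E N q : farey N q = [&& 0 <= numq q, numq q <= denq q & denq q <= N%:Z].
Proof.
rewrite /farey -numq_ge0.
have -> : (q <= 1) = (numq q <= denq q).
  have -> : (1 : rat) = qfrac 1 1 by rewrite /qfrac divr1.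
  by rewrite {1}(qE q) qfrac_le ?denq_gt0 // mulr1 mul1r.
by rewrite -andbA.
Qed.

Lemma half_E q : (q <= 1/2) = (2 * numq q <= denq q).
Proof.
have -> : (1/2 : rat) = qfrac 1 2 by rewrite /qfrac.
by rewrite {1}(qE q) qfrac_le ?denq_gt0 // mul1r mulrC.
Qed.

Lemma half_E' q : (1/2 <= q) = (denq q <= 2 * numq q).
Proof.
have -> : (1/2 : rat) = qfrac 1 2 by rewrite /qfrac.
by rewrite {1}(qE q) qfrac_le ?denq_gt0 // mul1r mulrC.
Qed.

Definition lf (a b c d : int) (q : rat) :=
  qfrac (a * numq q + b * denq q) (c * numq q + d * denq q).

Lemma lf_nd (a b c d a' b' c' d' : int) q :
  a'*a + b'*c = 1 -> a'*b + b'*d = 0 -> c'*a + d'*c = 0 -> c'*b + d'*d = 1 ->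
  0 < c * numq q + d * denq q ->
  numq (lf a b c d q) = a * numq q + b * denq q /\
  denq (lf a b c d q) = c * numq q + d * denq q.
Proof.
move=> e1 e2 e3 e4 pos; apply: qfrac_nd => //.
apply: (@coprime_lin _ _ _ _ a' b' c' d' (nd_coprime q)).
- transitivity ((a'*a + b'*c) * numq q + (a'*b + b'*d) * denq q); last by ring.
  by rewrite e1 e2; ring.
- transitivity ((c'*a + d'*c) * numq q + (c'*b + d'*d) * denq q); last by ring.
  by rewrite e3 e4; ring.
Qed.

Lemma lf_inv (a b c d a' b' c' d' : int) q :
  a'*a + b'*c = 1 -> a'*b + b'*d = 0 -> c'*a + d'*c = 0 -> c'*b + d'*d = 1 ->
  0 < c * numq q + d * denq q ->
  lf a' b' c' d' (lf a b c d q) = q.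
Proof.
move=> e1 e2 e3 e4 pos.
rewrite [LHS]/lf.
have [-> ->] := @lf_nd a b c d a' b' c' d' q e1 e2 e3 e4 pos.
rewrite [RHS]qE; congr qfrac.
- transitivity ((a'*a + b'*c) * numq q + (a'*b + b'*d) * denq q); first by ring.
  by rewrite e1 e2; ring.
- transitivity ((c'*a + d'*c) * numq q + (c'*b + d'*d) * denq q); first by ring.
  by rewrite e3 e4; ring.
Qed.

Lemma lf_mono (a b c d : int) x y :
  0 < c * numq x + d * denq x -> 0 < c * numq y + d * denq y ->
  (lf a b c d x <= lf a b c d y) =
  ((a*d - b*c) * (numq x * denq y - numq y * denq x) <= 0).
Proof.
move=> px py; rewrite /lf qfrac_le // -subr_le0; congr (_ <= 0); ring.
Qed.

Section Gen.
Variables (A B : pred rat) (PA PB : int -> int -> bool).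
Variables (a b c d a' b' c' d' : int).
Hypothesis hA : forall q, A q = PA (numq q) (denq q).
Hypothesis hB : forall q, B q = PB (numq q) (denq q).
Hypotheses (e1 : a'*a + b'*c = 1) (e2 : a'*b + b'*d = 0)
  (e3 : c'*a + d'*c = 0) (e4 : c'*b + d'*d = 1).
Hypotheses (f1 : a*a' + b*c' = 1) (f2 : a*b' + b*d' = 0)
  (f3 : c*a' + d*c' = 0) (f4 : c*b' + d*d' = 1).
Hypothesis wA : forall h k, 0 < k -> PA h k -> 0 < c*h + d*k /\ PB (a*h+b*k) (c*h+d*k).
Hypothesis wB : forall h k, 0 < k -> PB h k -> 0 < c'*h + d'*k /\ PA (a'*h+b'*k) (c'*h+d'*k).

Lemma gen_core :
  [/\ {in A, forall x, B (lf a b c d x)},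
      {in A, forall x, 0 < c * numq x + d * denq x},
      {in A &, injective (lf a b c d)}
    & {in B, forall y, exists2 x, A x & lf a b c d x = y}].
Proof.
have posA : {in A, forall x, 0 < c * numq x + d * denq x}.
  by move=> x; rewrite unfold_in hA => /(wA _ _ (denq_gt0 x)) [].
have posB : {in B, forall x, 0 < c' * numq x + d' * denq x}.
  by move=> x; rewrite unfold_in hB => /(wB _ _ (denq_gt0 x)) [].
split => //.
- move=> x Ax; have p := posA x Ax.
  rewrite hB; have [-> ->] := @lf_nd a b c d a' b' c' d' x e1 e2 e3 e4 p.
  by move: Ax; rewrite unfold_in hA => /(wA _ _ (denq_gt0 x)) [].
- move=> x y Ax Ay exy.
  by rewrite -(@lf_inv a b c d a' b' c' d' x) ?posA // exy lf_inv ?posA.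
- move=> y By; exists (lf a' b' c' d' y); last first.
    by rewrite lf_inv ?posB.
  have p := posB y By.
  rewrite hA; have [-> ->] := @lf_nd a' b' c' d' a b c d y f1 f2 f3 f4 p.
  by move: By; rewrite unfold_in hB => /(wB _ _ (denq_gt0 y)) [].
Qed.
End Gen.
Section Gen2.
Variables (A B : pred rat) (PA PB : int -> int -> bool).
Variables (a b c d a' b' c' d' : int).
Hypothesis hA : forall q, A q = PA (numq q) (denq q).
Hypothesis hB : forall q, B q = PB (numq q) (denq q).
Hypotheses (e1 : a'*a + b'*c = 1) (e2 : a'*b + b'*d = 0)
  (e3 : c'*a + d'*c = 0) (e4 : c'*b + d'*d = 1).
Hypotheses (f1 : a*a' + b*c' = 1) (f2 : a*b' + b*d' = 0)
  (f3 : c*a' + d*c' = 0) (f4 : c*b' + d*d' = 1).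
Hypothesis wA : forall h k, 0 < k -> PA h k -> 0 < c*h + d*k /\ PB (a*h+b*k) (c*h+d*k).
Hypothesis wB : forall h k, 0 < k -> PB h k -> 0 < c'*h + d'*k /\ PA (a'*h+b'*k) (c'*h+d'*k).

Lemma gen_core' :
  [/\ {in B, forall x, A (lf a' b' c' d' x)},
      {in B, forall x, 0 < c' * numq x + d' * denq x},
      {in B &, injective (lf a' b' c' d')}
    & {in A, forall y, exists2 x, B x & lf a' b' c' d' x = y}].
Proof.
exact: (@gen_core B A PB PA a' b' c' d' a b c d hB hA f1 f2 f3 f4 e1 e2 e3 e4 wB wA).
Qed.

Lemma gen_pres (det : a*d - b*c = 1) (det' : a'*d' - b'*c' = 1) :
  order_preserving_bij A B (lf a b c d) /\ order_preserving_bij B A (lf a' b' c' d').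
Proof.
have [w1 p1 i1 s1] := @gen_core A B PA PB a b c d a' b' c' d' hA hB e1 e2 e3 e4 f1 f2 f3 f4 wA wB.
have [w2 p2 i2 s2] := gen_core'.
split; split => // x y Ax Ay; rewrite q_le lf_mono ?p1 ?p2 // ?det ?det' mul1r => le;
  lia.
Qed.

Lemma gen_rev (det : a*d - b*c = -1) (det' : a'*d' - b'*c' = -1) :
  order_reversing_bij A B (lf a b c d) /\ order_reversing_bij B A (lf a' b' c' d').
Proof.
have [w1 p1 i1 s1] := @gen_core A B PA PB a b c d a' b' c' d' hA hB e1 e2 e3 e4 f1 f2 f3 f4 wA wB.
have [w2 p2 i2 s2] := gen_core'.
split; split => // x y Ax Ay; rewrite q_le lf_mono ?p1 ?p2 // ?det ?det' mulN1r => le;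
  lia.
Qed.
End Gen2.

Definition PL (n m : nat) (h k : int) :=
  [&& 0 <= h, h <= k, k <= n%:Z, h <= m%:Z, k - h <= n%:Z - m%:Z & 2 * h <= k].
Definition PR (n m : nat) (h k : int) :=
  [&& 0 <= h, h <= k, k <= n%:Z, h <= m%:Z, k - h <= n%:Z - m%:Z & k <= 2 * h].
Definition PF (N : nat) (M : int) (h k : int) :=
  [&& 0 <= h, h <= k, k <= N%:Z & h <= M].
Definition PG (N : nat) (M : int) (h k : int) :=
  [&& 0 <= h, h <= k, k <= N%:Z & k - h <= N%:Z - M].

Lemma L_E n m q : fareyB_left n m q = PL n m (numq q) (denq q).
Proof. rewrite /fareyB_left /fareyB farey_E half_E /PL; apply/idP/idP; lia. Qed.
Lemma R_E n m q : fareyB_right n m q = PR n m (numq q) (denq q).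
Proof. rewrite /fareyB_right /fareyB farey_E half_E' /PR; apply/idP/idP; lia. Qed.
Lemma F_E N M q : fareyF N M q = PF N M (numq q) (denq q).
Proof. rewrite /fareyF farey_E /PF; apply/idP/idP; lia. Qed.
Lemma G_E N M q : fareyG N M q = PG N M (numq q) (denq q).
Proof. rewrite /fareyG farey_E /PG; apply/idP/idP; lia. Qed.

Lemma opb_ext A B (f g : rat -> rat) : (forall x, f x = g x) ->
  order_preserving_bij A B f -> order_preserving_bij A B g.
Proof.
move=> e [w m i s]; split.
- by move=> x Ax; rewrite -e; apply: w.
- by move=> x y Ax Ay le; rewrite -!e; apply: m.
- by move=> x y Ax Ay; rewrite -!e; apply: i.
- by move=> y By; have [x Ax <-] := s y By; exists x.
Qed.
Lemma orb_ext A B (f g : rat -> rat) : (forall x, f x = g x) ->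
  order_reversing_bij A B f -> order_reversing_bij A B g.
Proof.
move=> e [w m i s]; split.
- by move=> x Ax; rewrite -e; apply: w.
- by move=> x y Ax Ay le; rewrite -!e; apply: m.
- by move=> x y Ax Ay; rewrite -!e; apply: i.
- by move=> y By; have [x Ax <-] := s y By; exists x.
Qed.

Ltac wd := move=> h k k0; rewrite /PL /PR /PF /PG => H; split; lia.

Section Main.
Variables (n m : nat) (hn : (1 < n)%N) (hm0 : (0 < m)%N) (hmn : (m < n)%N).

Lemma pair1 :
  order_preserving_bij (fareyB_left n m) (fareyF (n - m) m%:Z)
        (fun q => qfrac (numq q) (denq q - numq q)) /\
  order_preserving_bij (fareyF (n - m) m%:Z) (fareyB_left n m)
        (fun q => qfrac (numq q) (denq q + numq q)).
Proof.
have [] := @gen_pres _ _ _ _ 1 0 (-1) 1 1 0 1 1 (L_E n m) (F_E (n - m) m%:Z)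
  ltac:(by []) ltac:(by []) ltac:(by []) ltac:(by []) ltac:(by []) ltac:(by [])
  ltac:(by []) ltac:(by []) ltac:(wd) ltac:(wd) ltac:(by []) ltac:(by []).
by move=> P Q; split; [apply: opb_ext P|apply: opb_ext Q] => x; rewrite /lf; congr qfrac; ring.
Qed.

Lemma pair3 :
  order_preserving_bij (fareyB_right n m) (fareyG m (2 * m%:Z - n%:Z))
        (fun q => qfrac (2 * numq q - denq q) (numq q)) /\
  order_preserving_bij (fareyG m (2 * m%:Z - n%:Z)) (fareyB_right n m)
        (fun q => qfrac (denq q) (2 * denq q - numq q)).
Proof.
have [] := @gen_pres _ _ _ _ 2 (-1) 1 0 0 1 (-1) 2 (R_E n m) (G_E m (2 * m%:Z - n%:Z))
  ltac:(by []) ltac:(by []) ltac:(by []) ltac:(by []) ltac:(by []) ltac:(by [])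
  ltac:(by []) ltac:(by []) ltac:(wd) ltac:(wd) ltac:(by []) ltac:(by []).
by move=> P Q; split; [apply: opb_ext P|apply: opb_ext Q] => x; rewrite /lf; congr qfrac; ring.
Qed.

Lemma pair5 :
  order_reversing_bij (fareyB_left n m) (fareyG (n - m) (n%:Z - 2 * m%:Z))
        (fun q => qfrac (denq q - 2 * numq q) (denq q - numq q)) /\
  order_reversing_bij (fareyG (n - m) (n%:Z - 2 * m%:Z)) (fareyB_left n m)
        (fun q => qfrac (denq q - numq q) (2 * denq q - numq q)).
Proof.
have [] := @gen_rev _ _ _ _ (-2) 1 (-1) 1 (-1) 1 (-1) 2 (L_E n m) (G_E (n - m) (n%:Z - 2 * m%:Z))
  ltac:(by []) ltac:(by []) ltac:(by []) ltac:(by []) ltac:(by []) ltac:(by [])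
  ltac:(by []) ltac:(by []) ltac:(wd) ltac:(wd) ltac:(by []) ltac:(by []).
by move=> P Q; split; [apply: orb_ext P|apply: orb_ext Q] => x; rewrite /lf; congr qfrac; ring.
Qed.

Lemma pair7 :
  order_reversing_bij (fareyB_right n m) (fareyF m (n%:Z - m%:Z))
        (fun q => qfrac (denq q - numq q) (numq q)) /\
  order_reversing_bij (fareyF m (n%:Z - m%:Z)) (fareyB_right n m)
        (fun q => qfrac (denq q) (denq q + numq q)).
Proof.
have [] := @gen_rev _ _ _ _ (-1) 1 1 0 0 1 1 1 (R_E n m) (F_E m (n%:Z - m%:Z))
  ltac:(by []) ltac:(by []) ltac:(by []) ltac:(by []) ltac:(by []) ltac:(by [])
  ltac:(by []) ltac:(by []) ltac:(wd) ltac:(wd) ltac:(by []) ltac:(by []).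
by move=> P Q; split; [apply: orb_ext P|apply: orb_ext Q] => x; rewrite /lf; congr qfrac; ring.
Qed.
End Main.

Theorem theorem2 (n m : nat) (hn : (1 < n)%N) (hm0 : (0 < m)%N) (hmn : (m < n)%N) :
  let h q := numq q in let k q := denq q in
  ([/\ order_preserving_bij (fareyB_left n m) (fareyF (n - m) m%:Z)
        (fun q => qfrac (h q) (k q - h q)),
      order_preserving_bij (fareyF (n - m) m%:Z) (fareyB_left n m)
        (fun q => qfrac (h q) (k q + h q)),
      order_preserving_bij (fareyB_right n m) (fareyG m (2 * m%:Z - n%:Z))
        (fun q => qfrac (2 * h q - k q) (h q))
    & order_preserving_bij (fareyG m (2 * m%:Z - n%:Z)) (fareyB_right n m)
        (fun q => qfrac (k q) (2 * k q - h q))]) /\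
  ([/\ order_reversing_bij (fareyB_left n m) (fareyG (n - m) (n%:Z - 2 * m%:Z))
        (fun q => qfrac (k q - 2 * h q) (k q - h q)),
      order_reversing_bij (fareyG (n - m) (n%:Z - 2 * m%:Z)) (fareyB_left n m)
        (fun q => qfrac (k q - h q) (2 * k q - h q)),
      order_reversing_bij (fareyB_right n m) (fareyF m (n%:Z - m%:Z))
        (fun q => qfrac (k q - h q) (h q))
    & order_reversing_bij (fareyF m (n%:Z - m%:Z)) (fareyB_right n m)
        (fun q => qfrac (k q) (k q + h q))]).
Proof.
move=> h k; rewrite /h /k.
have [P1 P2] := pair1 n m hn hm0 hmn.
have [P3 P4] := pair3 n m hn hm0 hmn.
have [P5 P6] := pair5 n m hn hm0 hmn.
have [P7 P8] := pair7 n m hn hm0 hmn.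
by split; split.
Qed.
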